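(* Let $(\mathcal C,\otimes,\mathbb 1,c)$ be a symmetric monoidal category and $(H,m,u,\underline\Delta,\underline\varepsilon,S,S^{-1},\Lambda,\lambda,\phi,\theta)$ an extended Hopf algebra in $\mathcal C$. Then $(\phi,\theta)$ is an extended structure on the Frobenius algebra $(H,m,u,\Delta,\varepsilon)$, where $\Delta=(m\otimes S)(\mathrm{id}_H\otimes\underline\Delta\Lambda)$ and $\varepsilon=\lambda$.
   Context: Monoidal categories are taken strict. A Hopf algebra in $\mathcal C$ is $(H,m,u,\underline\Delta,\underline\varepsilon,S)$: an associative unital algebra and coassociative counital coalgebra with $\underline\Delta,\underline\varepsilon$ algebra morphisms and $m(S\otimes\mathrm{id})\underline\Delta=u\underline\varepsilon=m(\mathrm{id}\otimes S)\underline\Delta$. A left integral $\Lambda:\mathbb 1\to H$ satisfies $m(\mathrm{id}\otimes\Lambda)=\Lambda\underline\varepsilon$; a right cointegral $\lambda:H\to\mathbb 1$ satisfies $(\lambda\otimes\mathrm{id})\underline\Delta=u\lambda$; normalized means $\lambda\Lambda=\mathrm{id}_{\mathbb 1}$. An integral Hopf algebra has invertible antipode and a normalized pair. A morphism of integral Hopf algebras is an algebra and coalgebra morphism $f$ with $f\Lambda_H=\Lambda_K$, $\lambda_Kf=\lambda_H$ (and compatible with the antipodes). An extended Hopf algebra is an integral Hopf algebra with $\phi:H\to H$, $\theta:\mathbb 1\to H$ such that (i) $\phi$ is a morphism of integral Hopf algebras with $\phi^2=\mathrm{id}_H$; (ii) $\phi m(\theta\otimes\mathrm{id}_H)=m(\theta\otimes\mathrm{id}_H)$;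 (iii) $m(\phi\otimes S)\underline\Delta\Lambda=m(\theta\otimes\theta)$. For a Frobenius algebra $(A,m,u,\Delta,\varepsilon)$, an extended structure is $(\phi,\theta)$ with (i) $\phi$ a Frobenius algebra morphism (preserving $m,u,\Delta,\varepsilon$), $\phi^2=\mathrm{id}$; (ii) $\phi m(\theta\otimes\mathrm{id})=m(\theta\otimes\mathrm{id})$; (iii) $m(\phi\otimes\mathrm{id})\Delta u=m(\theta\otimes\theta)$. *)

(* Defs.v *)
Set Implicit Arguments.
Unset Strict Implicit.

(* Transport of a morphism along equalities of its domain/codomain objects.
   Needed to express strictness (object equalities such as (A*B)*C = A*(B*C)). *)
Definition hcast {O : Type} (Hm : O -> O -> Type) {A A' B B' : O}
  (e1 : A = A') (e2 : B = B') (f : Hm A B) : Hm A' B' :=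
  match e1 in _ = A0, e2 in _ = B0 return Hm A0 B0 with
  | eq_refl, eq_refl => f end.
Arguments hcast {O} Hm {A A' B B'} e1 e2 f.

Record SMC := {
  Ob : Type;
  Hom : Ob -> Ob -> Type;
  comp : forall A B C : Ob, Hom B C -> Hom A B -> Hom A C;
  idm : forall A : Ob, Hom A A;
  comp_assoc : forall A B C D (f : Hom A B) (g : Hom B C) (h : Hom C D),
      comp h (comp g f) = comp (comp h g) f;
  comp_idl : forall A B (f : Hom A B), comp (idm B) f = f;
  comp_idr : forall A B (f : Hom A B), comp f (idm A) = f;
  tob : Ob -> Ob -> Ob;
  unitob : Ob;
  tens : forall A B C D : Ob, Hom A B -> Hom C D -> Hom (tob A C) (tob B D);
  tens_id : forall A B, tens (idm A) (idm B) = idm (tob A B);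
  tens_comp : forall A B C A' B' C' (f : Hom A B) (g : Hom B C)
      (f' : Hom A' B') (g' : Hom B' C'),
      tens (comp g f) (comp g' f') = comp (tens g g') (tens f f');
  tob_assoc : forall A B C, tob (tob A B) C = tob A (tob B C);
  tob_unitl : forall A, tob unitob A = A;
  tob_unitr : forall A, tob A unitob = A;
  tens_assoc : forall A B C A' B' C' (f : Hom A A') (g : Hom B B') (h : Hom C C'),
      hcast Hom (tob_assoc A B C) (tob_assoc A' B' C') (tens (tens f g) h)
      = tens f (tens g h);
  tens_unitl : forall A B (f : Hom A B),
      hcast Hom (tob_unitl A) (tob_unitl B) (tens (idm unitob) f) = f;
  tens_unitr : forall A B (f : Hom A B),
      hcast Hom (tob_unitr A) (tob_unitr B) (tens f (idm unitob)) = f;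
  braid : forall A B, Hom (tob A B) (tob B A);
  braid_nat : forall A A' B B' (f : Hom A A') (g : Hom B B'),
      comp (braid A' B') (tens f g) = comp (tens g f) (braid A B);
  braid_hex1 : forall A B C,
      braid A (tob B C) =
      hcast Hom eq_refl (eq_sym (tob_assoc B C A))
        (comp (tens (idm B) (braid A C))
              (hcast Hom (tob_assoc A B C) (tob_assoc B A C)
                     (tens (braid A B) (idm C))));
  braid_hex2 : forall A B C,
      braid (tob A B) C =
      hcast Hom eq_refl (tob_assoc C A B)
        (comp (tens (braid A C) (idm B))
              (hcast Hom (eq_sym (tob_assoc A B C)) (eq_sym (tob_assoc A C B))
                     (tens (idm A) (braid B C))));
  braid_sym : forall A B, comp (braid B A) (braid A B) = idm (tob A B)
}.

Arguments Hom : clear implicits.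
Arguments comp {s A B C} _ _.
Arguments idm {s} A.
Arguments tob {s} _ _.
Arguments unitob {s}.
Arguments tens {s A B C D} _ _.
Arguments tob_assoc {s} A B C.
Arguments tob_unitl {s} A.
Arguments tob_unitr {s} A.
Arguments braid {s} A B.

Section Structures.
Variable C : SMC.
Local Notation Hm := (Hom C).
Local Notation "g \o f" := (comp g f) (at level 40, left associativity).
Local Notation "f (x) g" := (tens f g) (at level 35).
Local Notation "A * B" := (@tob C A B).
Local Notation "1" := (@unitob C).

Variable H : Ob C.

Definition asL {X} (f : Hm ((H * H) * H) X) : Hm (H * (H * H)) X :=
  hcast Hm (tob_assoc H H H) eq_refl f.
Definition asLc {X} (f : Hm X ((H * H) * H)) : Hm X (H * (H * H)) :=
  hcast Hm eq_refl (tob_assoc H H H) f.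
Definition dom_ul {X} (f : Hm (1 * H) X) : Hm H X := hcast Hm (tob_unitl H) eq_refl f.
Definition dom_ur {X} (f : Hm (H * 1) X) : Hm H X := hcast Hm (tob_unitr H) eq_refl f.
Definition cod_ul {X} (f : Hm X (1 * H)) : Hm X H := hcast Hm eq_refl (tob_unitl H) f.
Definition cod_ur {X} (f : Hm X (H * 1)) : Hm X H := hcast Hm eq_refl (tob_unitr H) f.
Definition dom_11 {X} (f : Hm (1 * 1) X) : Hm 1 X := hcast Hm (tob_unitl 1) eq_refl f.
Definition cod_11 {X} (f : Hm X (1 * 1)) : Hm X 1 := hcast Hm eq_refl (tob_unitl 1) f.

Definition eq4 : (H * H) * (H * H) = H * ((H * H) * H) :=
  eq_trans (tob_assoc H H (H * H)) (f_equal (tob H) (eq_sym (tob_assoc H H H))).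
Definition midswap : Hm ((H * H) * (H * H)) ((H * H) * (H * H)) :=
  hcast Hm (eq_sym eq4) (eq_sym eq4)
    (idm H (x) (braid H H (x) idm H)).

Definition is_algebra (m : Hm (H * H) H) (u : Hm 1 H) : Prop :=
  asL (m \o (m (x) idm H)) = m \o (idm H (x) m)
  /\ dom_ul (m \o (u (x) idm H)) = idm H
  /\ dom_ur (m \o (idm H (x) u)) = idm H.

Definition is_coalgebra (D : Hm H (H * H)) (e : Hm H 1) : Prop :=
  asLc ((D (x) idm H) \o D) = (idm H (x) D) \o D
  /\ cod_ul ((e (x) idm H) \o D) = idm H
  /\ cod_ur ((idm H (x) e) \o D) = idm H.

Definition is_hopf (m : Hm (H * H) H) (u : Hm 1 H) (D : Hm H (H * H))
    (e : Hm H 1) (S : Hm H H) : Prop :=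
  is_algebra m u /\ is_coalgebra D e
  /\ D \o m = (m (x) m) \o midswap \o (D (x) D)
  /\ D \o u = dom_11 (u (x) u)
  /\ e \o m = cod_11 (e (x) e)
  /\ e \o u = idm 1
  /\ m \o (S (x) idm H) \o D = u \o e
  /\ m \o (idm H (x) S) \o D = u \o e.

Definition is_left_integral (m : Hm (H * H) H) (e : Hm H 1) (L : Hm 1 H) : Prop :=
  dom_ur (m \o (idm H (x) L)) = L \o e.

Definition is_right_cointegral (u : Hm 1 H) (D : Hm H (H * H)) (l : Hm H 1) : Prop :=
  cod_ul ((l (x) idm H) \o D) = u \o l.

Definition is_integral_hopf (m : Hm (H * H) H) (u : Hm 1 H) (D : Hm H (H * H)) (e : Hm H 1) (S Sinv : Hm H H) (L : Hm 1 H) (l : Hm H 1) : Prop :=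
  is_hopf m u D e S
  /\ S \o Sinv = idm H /\ Sinv \o S = idm H
  /\ is_left_integral m e L /\ is_right_cointegral u D l
  /\ l \o L = idm 1.

Definition is_integral_hopf_endo (m : Hm (H * H) H) (u : Hm 1 H) (D : Hm H (H * H)) (e : Hm H 1) (S Sinv : Hm H H) (L : Hm 1 H) (l : Hm H 1)
    (f : Hm H H) : Prop :=
  f \o m = m \o (f (x) f) /\ f \o u = u
  /\ D \o f = (f (x) f) \o D /\ e \o f = e
  /\ f \o L = L /\ l \o f = l
  /\ f \o S = S \o f /\ f \o Sinv = Sinv \o f.

Definition is_extended_hopf (m : Hm (H * H) H) (u : Hm 1 H) (D : Hm H (H * H)) (e : Hm H 1) (S Sinv : Hm H H) (L : Hm 1 H) (l : Hm H 1) (phi : Hm H H) (theta : Hm 1 H) : Prop :=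
  is_integral_hopf m u D e S Sinv L l
  /\ is_integral_hopf_endo m u D e S Sinv L l phi
  /\ phi \o phi = idm H
  /\ dom_ul (phi \o m \o (theta (x) idm H)) = dom_ul (m \o (theta (x) idm H))
  /\ m \o (phi (x) S) \o D \o L = dom_11 (m \o (theta (x) theta)).

Definition is_frobenius (m : Hm (H * H) H) (u : Hm 1 H) (D : Hm H (H * H))
    (e : Hm H 1) : Prop :=
  is_algebra m u /\ is_coalgebra D e
  /\ (idm H (x) m) \o asLc (D (x) idm H) = D \o m
  /\ D \o m = (m (x) idm H) \o hcast Hm eq_refl (eq_sym (tob_assoc H H H)) (idm H (x) D).

Definition is_extended_frobenius (m : Hm (H * H) H) (u : Hm 1 H) (D : Hm H (H * H)) (e : Hm H 1)
    (phi : Hm H H) (theta : Hm 1 H) : Prop :=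
  (phi \o m = m \o (phi (x) phi) /\ phi \o u = u
   /\ D \o phi = (phi (x) phi) \o D /\ e \o phi = e)
  /\ phi \o phi = idm H
  /\ dom_ul (phi \o m \o (theta (x) idm H)) = dom_ul (m \o (theta (x) idm H))
  /\ m \o (phi (x) idm H) \o D \o u = dom_11 (m \o (theta (x) theta)).

Definition frob_coproduct (m : Hm (H * H) H) (Dbar : Hm H (H * H)) (S : Hm H H)
    (L : Hm 1 H) : Hm H (H * H) :=
  (m (x) S) \o hcast Hm eq_refl (eq_sym (tob_assoc H H H))
                (dom_ur (idm H (x) (Dbar \o L))).

End Structures.

(* Main.v *)
Require Import Defs.
From Stdlib Require Import Eqdep PeanoNat.
Set Implicit Arguments. Unset Strict Implicit.

Section Inf.
Variable C : SMC.
Local Notation Hm := (Hom C).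
Local Notation "g \o f" := (comp g f) (at level 40, left associativity).

Definition hrel {A B A' B' : Ob C} (f : Hm A B) (g : Hm A' B') : Prop :=
  exists (e1 : A = A') (e2 : B = B'), hcast Hm e1 e2 f = g.

Lemma hrel_refl {A B} (f : Hm A B) : hrel f f.
Proof. exists eq_refl, eq_refl; reflexivity. Qed.

Lemma hrel_sym {A B A' B'} (f : Hm A B) (g : Hm A' B') : hrel f g -> hrel g f.
Proof. intros [e1 [e2 E]]; subst A' B'; subst g; exists eq_refl, eq_refl; reflexivity. Qed.

Lemma hrel_trans {A B A' B' A'' B''} (f : Hm A B) (g : Hm A' B') (h : Hm A'' B'') :
  hrel f g -> hrel g h -> hrel f h.
Proof. intros [e1 [e2 E]] [e3 [e4 E']]; subst; exists eq_refl, eq_refl; reflexivity. Qed.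

Lemma hrel_eq {A B} (f g : Hm A B) : hrel f g -> f = g.
Proof. intros [e1 [e2 E]]. rewrite (UIP_refl _ _ e1), (UIP_refl _ _ e2) in E. exact E. Qed.

Lemma hrel_comp {A B C0 A' B' C'} (f : Hm A B) (f' : Hm A' B') (g : Hm B C0) (g' : Hm B' C') :
  hrel f f' -> hrel g g' -> hrel (g \o f) (g' \o f').
Proof.
  intros [e1 [e2 E]] [e3 [e4 E']]; subst A' B' C'. subst.
  rewrite (UIP_refl _ _ e3). exists eq_refl, eq_refl; reflexivity.
Qed.

Lemma hrel_tens {A B C0 D A' B' C' D'} (f : Hm A B) (f' : Hm A' B') (g : Hm C0 D) (g' : Hm C' D') :
  hrel f f' -> hrel g g' -> hrel (tens f g) (tens f' g').
Proof. intros [e1 [e2 E]] [e3 [e4 E']]; subst; exists eq_refl, eq_refl; reflexivity. Qed.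

Lemma hrel_hcast_l {A B A' B' A'' B''} (e1 : A = A') (e2 : B = B') (f : Hm A B) (g : Hm A'' B'') :
  hrel f g -> hrel (hcast Hm e1 e2 f) g.
Proof. intros Hr; subst; exact Hr. Qed.

Lemma hrel_hcast_r {A B A' B' A'' B''} (e1 : A = A') (e2 : B = B') (f : Hm A B) (g : Hm A'' B'') :
  hrel g f -> hrel g (hcast Hm e1 e2 f).
Proof. intros Hr; subst; exact Hr. Qed.

Lemma hrel_idm {A A'} : A = A' -> hrel (idm A) (idm A').
Proof. intros; subst; apply hrel_refl. Qed.

Variable H : Ob C.

Fixpoint P (n : nat) : Ob C :=
  match n with 0 => unitob | S k => match k with 0 => H | S _ => tob H (P k) end end.

Lemma Pcat a b : P (a + b) = tob (P a) (P b).
Proof.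
  induction a as [|a IH].
  - simpl. symmetry; apply tob_unitl.
  - destruct a as [|a].
    + destruct b as [|b]. simpl. symmetry; apply tob_unitr. reflexivity.
    + change (tob H (P (S a + b)) = tob (tob H (P (S a))) (P b)).
      rewrite IH. symmetry; apply tob_assoc.
Qed.

Definition W a b := Hm (P a) (P b).

Class Sum (a c ac : nat) : Prop := sum_eq : ac = a + c.
#[local] Hint Extern 10 (Sum ?a ?c ?ac) =>
  (tryif has_evar a then fail else tryif has_evar c then fail else
  let n := eval compute in (a + c) in unify ac n; exact (@eq_refl nat n)) : typeclass_instances.
#[local] Hint Mode Sum ! ! - : typeclass_instances.

Definition Pe {a c ac} (s : Sum a c ac) : P ac = tob (P a) (P c) :=
  eq_trans (f_equal P s) (Pcat a c).

Definition tW {a b c d ac bd} {s1 : Sum a c ac} {s2 : Sum b d bd} (f : W a b) (g : W c d) : W ac bd :=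
  hcast Hm (eq_sym (Pe s1)) (eq_sym (Pe s2)) (tens f g).
Definition cW a b {ab ba} {s1 : Sum a b ab} {s2 : Sum b a ba} : W ab ba :=
  hcast Hm (eq_sym (Pe s1)) (eq_sym (Pe s2)) (braid (P a) (P b)).
Arguments cW a b {ab ba s1 s2}.

Lemma hrel_tW_tens {a b c d ac bd} (s1 : Sum a c ac) (s2 : Sum b d bd) (f : W a b) (g : W c d) :
  hrel (@tW _ _ _ _ _ _ s1 s2 f g) (tens f g).
Proof. unfold tW. apply hrel_hcast_l, hrel_refl. Qed.

Ltac hs := repeat (first [ apply hrel_hcast_l | apply hrel_hcast_r | apply hrel_refl
  | apply hrel_comp | apply hrel_tens ]).

Lemma hrel_tens_l {A B} (f : Hm A B) : hrel (tens (idm unitob) f) f.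
Proof. rewrite <- (tens_unitl f) at 2. apply hrel_sym, hrel_hcast_l, hrel_refl. Qed.
Lemma hrel_tens_r {A B} (f : Hm A B) : hrel (tens f (idm unitob)) f.
Proof. rewrite <- (tens_unitr f) at 2. apply hrel_sym, hrel_hcast_l, hrel_refl. Qed.
Lemma hrel_braid {A A' B B'} : A = A' -> B = B' -> hrel (braid A B) (braid A' B').
Proof. intros; subst; apply hrel_refl. Qed.

Notation i0 := (idm (P 0)).
Notation i1 := (idm (P 1)).
Notation i2 := (idm (P 2)).
Notation i3 := (idm (P 3)).
Notation i4 := (idm (P 4)).

Lemma tW_comp {a b c a' b' c' aa bb cc} {s1 : Sum a a' aa} {s2 : Sum b b' bb} {s3 : Sum c c' cc}
  (f : W a b) (g : W b c) (f' : W a' b') (g' : W b' c') :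
  comp (@tW _ _ _ _ _ _ s2 s3 g g') (@tW _ _ _ _ _ _ s1 s2 f f')
  = @tW _ _ _ _ _ _ s1 s3 (comp g f) (comp g' f').
Proof.
  apply hrel_eq. unfold tW. apply hrel_trans with (tens g g' \o tens f f'). hs.
  rewrite <- tens_comp. hs.
Qed.

Lemma tW_id {a b ab} {s : Sum a b ab} : @tW _ _ _ _ _ _ s s (idm (P a)) (idm (P b)) = idm (P ab).
Proof.
  apply hrel_eq. unfold tW. apply hrel_hcast_l. rewrite tens_id. apply hrel_idm.
  exact (eq_sym (Pe s)).
Qed.

Lemma tW_l0 {a b} {s1 : Sum 0 a a} {s2 : Sum 0 b b} (f : W a b) : @tW _ _ _ _ _ _ s1 s2 i0 f = f.
Proof. apply hrel_eq. unfold tW. apply hrel_hcast_l. apply hrel_tens_l. Qed.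

Lemma tW_r0 {a b} {s1 : Sum a 0 a} {s2 : Sum b 0 b} (f : W a b) : @tW _ _ _ _ _ _ s1 s2 f i0 = f.
Proof. apply hrel_eq. unfold tW. apply hrel_hcast_l. apply hrel_tens_r. Qed.

Lemma tWA {a b c d e f ac bd ce df n k} {s1 : Sum a c ac} {s2 : Sum b d bd} {s3 : Sum ac e n}
  {s4 : Sum bd f k} {s5 : Sum c e ce} {s6 : Sum d f df} {s7 : Sum a ce n} {s8 : Sum b df k}
  (x : W a b) (y : W c d) (z : W e f) :
  @tW _ _ _ _ _ _ s3 s4 (@tW _ _ _ _ _ _ s1 s2 x y) z = @tW _ _ _ _ _ _ s7 s8 x (@tW _ _ _ _ _ _ s5 s6 y z).
Proof.
  apply hrel_eq. unfold tW. apply hrel_trans with (tens (tens x y) z). hs.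
  apply hrel_trans with (tens x (tens y z)). rewrite <- (tens_assoc x y z). hs. hs.
Qed.

Lemma cW_nat {a b a' b' ab ba ab' ba'} {s1 : Sum a b ab} {s2 : Sum b a ba} {s3 : Sum a' b' ab'}
  {s4 : Sum b' a' ba'} (f : W a a') (g : W b b') :
  comp (@cW a' b' _ _ s3 s4) (@tW _ _ _ _ _ _ s1 s3 f g) = comp (@tW _ _ _ _ _ _ s2 s4 g f) (@cW a b _ _ s1 s2).
Proof.
  apply hrel_eq. unfold tW, cW. apply hrel_trans with (braid (P a') (P b') \o tens f g). hs.
  rewrite braid_nat. hs.
Qed.

Lemma cW10 : cW 1 0 = i1.
Proof.
  set (b := braid H unitob).
  set (beta := hcast Hm (tob_unitr H) (tob_unitl H) b).
  set (gam := hcast Hm (tob_unitl H) (tob_unitr H) (braid unitob H)).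
  assert (Eb : cW 1 0 = beta).
  { apply hrel_eq. unfold cW, beta. hs. }
  assert (E1 : beta = beta \o beta).
  { apply hrel_eq. apply hrel_trans with b. unfold beta; hs.
    apply hrel_trans with (braid H (tob unitob unitob)).
    apply hrel_braid. reflexivity. symmetry; apply tob_unitl.
    rewrite braid_hex1. apply hrel_hcast_l. apply hrel_comp.
    - apply hrel_hcast_l. eapply hrel_trans. apply hrel_tens_r. unfold beta; hs.
    - eapply hrel_trans. apply hrel_tens_l. unfold beta; hs. }
  assert (E2 : gam \o beta = i1).
  { apply hrel_eq. apply hrel_trans with (idm (tob H unitob)).
    rewrite <- braid_sym. unfold gam, beta. hs. apply hrel_idm. apply tob_unitr. }
  assert (E3 : beta = i1).
  { transitivity ((gam \o beta) \o beta). rewrite E2; symmetry; apply comp_idl.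
    rewrite <- comp_assoc, <- E1. exact E2. }
  congruence.
Qed.

Lemma cW01 : cW 0 1 = i1.
Proof.
  assert (E : cW 0 1 \o cW 1 0 = i1).
  { apply hrel_eq. unfold cW. apply hrel_trans with (braid unitob H \o braid H unitob). hs.
    rewrite braid_sym. apply hrel_idm. apply tob_unitr. }
  rewrite cW10 in E. rewrite comp_idr in E. exact E.
Qed.

Local Notation "g ∘ f" := (comp g f) (at level 38, right associativity).
Local Notation "f ⊠ g" := (tW f g) (at level 35, right associativity).

Lemma cA {X A B D0} (h : Hm B D0) (g : Hm A B) (f : Hm X A) : h ∘ (g ∘ f) = (h ∘ g) ∘ f.
Proof. apply comp_assoc. Qed.

Ltac rnorm := repeat rewrite <- comp_assoc.
Ltac gather tt := lazymatch tt with
  | comp ?aa ?bb => gather bb; rewrite (cA aa bb)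
  | _ => idtac end.
Ltac rwc_ EE := let E' := fresh "Erw" in pose proof EE as E'; rewrite <- ?comp_assoc in E'; rnorm;
  first [ rewrite E' | lazymatch type of E' with ?ll = _ => gather ll; rewrite E' end ]; rnorm; clear E'.
Tactic Notation "rwc" constr(EE) := rwc_ EE.
Tactic Notation "rwcb" constr(EE) := rwc_ (eq_sym EE).

Lemma tW_compc {a b c a' b' c' aa bb cc X} {s1 : Sum a a' aa} {s2 : Sum b b' bb} {s3 : Sum c c' cc}
  (f : W a b) (g : W b c) (f' : W a' b') (g' : W b' c') (z : Hm X (P aa)) :
  comp (@tW _ _ _ _ _ _ s2 s3 g g') (comp (@tW _ _ _ _ _ _ s1 s2 f f') z)
  = comp (@tW _ _ _ _ _ _ s1 s3 (comp g f) (comp g' f')) z.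
Proof. rewrite comp_assoc, tW_comp. reflexivity. Qed.

Lemma tW_split_r {a b c d ac bd bc} {s1 : Sum a c ac} {s2 : Sum b d bd} {s3 : Sum b c bc}
  (f : W a b) (g : W c d) :
  @tW _ _ _ _ _ _ s1 s2 f g = comp (@tW _ _ _ _ _ _ s3 s2 (idm (P b)) g) (@tW _ _ _ _ _ _ s1 s3 f (idm (P c))).
Proof. rewrite tW_comp, comp_idl, comp_idr. reflexivity. Qed.
Lemma tW_split_l {a b c d ac bd ad} {s1 : Sum a c ac} {s2 : Sum b d bd} {s3 : Sum a d ad}
  (f : W a b) (g : W c d) :
  @tW _ _ _ _ _ _ s1 s2 f g = comp (@tW _ _ _ _ _ _ s3 s2 f (idm (P d))) (@tW _ _ _ _ _ _ s1 s3 (idm (P a)) g).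
Proof. rewrite tW_comp, comp_idl, comp_idr. reflexivity. Qed.
Lemma tW_cl {a b c d cd ad bd} {s1 : Sum a d ad} {s2 : Sum b d bd} {s3 : Sum c d cd}
  (f : W a b) (g : W b c) :
  @tW _ _ _ _ _ _ s1 s3 (comp g f) (idm (P d)) = comp (@tW _ _ _ _ _ _ s2 s3 g (idm (P d))) (@tW _ _ _ _ _ _ s1 s2 f (idm (P d))).
Proof. rewrite tW_comp, comp_idl. reflexivity. Qed.
Lemma tW_cr {a b c d da db dc} {s1 : Sum d a da} {s2 : Sum d b db} {s3 : Sum d c dc}
  (f : W a b) (g : W b c) :
  @tW _ _ _ _ _ _ s1 s3 (idm (P d)) (comp g f) = comp (@tW _ _ _ _ _ _ s2 s3 (idm (P d)) g) (@tW _ _ _ _ _ _ s1 s2 (idm (P d)) f).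
Proof. rewrite tW_comp, comp_idl. reflexivity. Qed.
Lemma tW_id11 : tW i1 i1 = i2. Proof. apply tW_id. Qed.
Lemma tW_id12 : tW i1 i2 = i3. Proof. apply tW_id. Qed.
Lemma tW_id21 : tW i2 i1 = i3. Proof. apply tW_id. Qed.

Lemma tW_sr {a b c d c' ac bd ac'} {s1 : Sum a c' ac'} {s2 : Sum b d bd} {s3 : Sum b c ac}
  (f : W a b) (g : W c d) (h : W c' c) :
  @tW _ _ _ _ _ _ s1 s2 f (comp g h) = comp (@tW _ _ _ _ _ _ s3 s2 (idm (P b)) g) (@tW _ _ _ _ _ _ s1 s3 f h).
Proof. rewrite tW_comp, comp_idl. reflexivity. Qed.
Lemma tW_sl {a b c d a' ac bd a'c} {s1 : Sum a' c a'c} {s2 : Sum b d bd} {s3 : Sum a d ac}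
  (f : W c d) (g : W a b) (h : W a' a) :
  @tW _ _ _ _ _ _ s1 s2 (comp g h) f = comp (@tW _ _ _ _ _ _ s3 s2 g (idm (P d))) (@tW _ _ _ _ _ _ s1 s3 h f).
Proof. rewrite tW_comp, comp_idl. reflexivity. Qed.

Lemma tW_sr' {a b c d c' ac bd ac'} {s1 : Sum a c' ac'} {s2 : Sum b d bd} {s3 : Sum a c ac}
  (f : W a b) (g : W c d) (h : W c' c) :
  @tW _ _ _ _ _ _ s1 s2 f (comp g h) = comp (@tW _ _ _ _ _ _ s3 s2 f g) (@tW _ _ _ _ _ _ s1 s3 (idm (P a)) h).
Proof. rewrite tW_comp, comp_idr. reflexivity. Qed.
Lemma tW_sl' {a b c d a' ac bd a'c} {s1 : Sum a' c a'c} {s2 : Sum b d bd} {s3 : Sum a c ac}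
  (f : W c d) (g : W a b) (h : W a' a) :
  @tW _ _ _ _ _ _ s1 s2 (comp g h) f = comp (@tW _ _ _ _ _ _ s3 s2 g f) (@tW _ _ _ _ _ _ s1 s3 h (idm (P c))).
Proof. rewrite tW_comp, comp_idr. reflexivity. Qed.

Ltac mrg := first [ rewrite tW_compc | rewrite tW_comp ]; rnorm.
Ltac idl := rewrite ?comp_idl, ?comp_idr; rnorm.

Variables (m : W 2 1) (u : W 0 1) (D : W 1 2) (ep : W 1 0) (S Si : W 1 1)
  (L : W 0 1) (l : W 1 0) (phi : W 1 1) (th : W 0 1).
Hypothesis mA : m ∘ (m ⊠ i1) = m ∘ (i1 ⊠ m).
Hypothesis mUl : m ∘ (u ⊠ i1) = i1.
Hypothesis mUr : m ∘ (i1 ⊠ u) = i1.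
Hypothesis DA : (D ⊠ i1) ∘ D = (i1 ⊠ D) ∘ D.
Hypothesis DUl : (ep ⊠ i1) ∘ D = i1.
Hypothesis DUr : (i1 ⊠ ep) ∘ D = i1.
Hypothesis Bi : D ∘ m = (m ⊠ m) ∘ (i1 ⊠ cW 1 1 ⊠ i1) ∘ (D ⊠ D).
Hypothesis Du : D ∘ u = u ⊠ u.
Hypothesis epm : ep ∘ m = ep ⊠ ep.
Hypothesis epu : ep ∘ u = i0.
Hypothesis SL : m ∘ (S ⊠ i1) ∘ D = u ∘ ep.
Hypothesis SR : m ∘ (i1 ⊠ S) ∘ D = u ∘ ep.
Hypothesis SSi : S ∘ Si = i1.
Hypothesis SiS : Si ∘ S = i1.
Hypothesis LI : m ∘ (i1 ⊠ L) = L ∘ ep.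
Hypothesis RC : (l ⊠ i1) ∘ D = u ∘ l.
Hypothesis lL : l ∘ L = i0.

Lemma PsiPhi : ((i1 ⊠ m) ∘ (i1 ⊠ S ⊠ i1) ∘ (D ⊠ i1)) ∘ ((i1 ⊠ m) ∘ (D ⊠ i1)) = i2.
Proof.
  rnorm.
  rewrite (tW_compc i1 D). idl.
  rewrite (tW_split_r D m).
  assert (E2 : (D ⊠ i2) ∘ (D ⊠ i1) = ((i1 ⊠ D) ⊠ i1) ∘ (D ⊠ i1)).
  { rewrite <- tW_id11, <- tWA, tW_comp, DA, <- tW_comp. idl. reflexivity. }
  rwc E2.
  assert (E3 : i2 ⊠ m = i1 ⊠ (i1 ⊠ m)) by (rewrite <- tW_id11, tWA; reflexivity).
  rewrite E3, tWA. repeat mrg. idl.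
  assert (E4 : m ∘ (S ⊠ m) ∘ (D ⊠ i1) = ep ⊠ i1).
  { rewrite (tW_split_r S m). rwcb mA.
    rewrite <- tW_id11, <- tWA. repeat mrg. idl. rnorm. rewrite SL, tW_cl. rwc mUl. idl. reflexivity. }
  rewrite E4, <- tWA. mrg. rewrite DUr. idl. apply tW_id11.
Qed.

Lemma RPhi : (l ⊠ i1) ∘ (m ⊠ i1) ∘ (S ⊠ D) ∘ (i1 ⊠ m) ∘ (D ⊠ i1) = i1 ⊠ l.
Proof.
  rewrite (tW_compc i1 S). idl. rewrite Bi, !tW_sr. rnorm.
  rewrite <- (tWA S D D), (tW_comp D (S ⊠ D)). idl.
  rewrite (tW_split_l S D). rwcb DA. rewrite !tW_sl. rnorm.
  assert (E1 : (S ⊠ i2) ⊠ i2 = (S ⊠ i1) ⊠ i3).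
  { rewrite <- tW_id12, <- (tWA (S ⊠ i1) i1 i2), (tWA S i1 i1), tW_id11. reflexivity. }
  assert (E2 : (D ⊠ i1) ⊠ i2 = D ⊠ i3) by (rewrite tWA, tW_id12; reflexivity).
  rewrite E1, E2, <- (tWA i1 i1 (cW 1 1 ⊠ i1)), tW_id11.
  rewrite (tW_compc (S ⊠ i1) i2). idl. rewrite (tW_compc D (S ⊠ i1)). idl.
  assert (E3 : (m ⊠ i1) ∘ (i1 ⊠ (m ⊠ m)) = (m ⊠ m) ∘ (m ⊠ i3)).
  { rewrite <- (tWA i1 m m), tW_comp, <- mA, <- tW_id12, <- (tWA m i1 i2), tW_comp. idl. reflexivity. }
  rwc E3. rewrite (tW_compc ((S ⊠ i1) ∘ D) m). idl. rewrite SL, tW_sl. rnorm.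
  assert (E4 : (ep ⊠ (cW 1 1 ⊠ i1)) ∘ (D ⊠ D) = (cW 1 1 ⊠ i1) ∘ (i1 ⊠ D)).
  { rewrite (tW_split_l D D), (tW_split_r ep (cW 1 1 ⊠ i1)), tW_l0. rnorm. f_equal.
    rewrite <- tW_id12, <- (tWA ep i1 i2), tW_compc. idl. rewrite DUl, tW_id12. apply comp_idl. }
  rwc E4.
  rewrite <- tW_id12, <- (tWA u i1 i2), (tW_compc (u ⊠ i1) m), mUl. idl.
  rewrite (tW_compc i1 l). idl. rewrite (tW_split_r l m), tW_l0. rnorm.
  rewrite <- tW_id11, <- (tWA l i1 i1), (tW_compc (cW 1 1) (l ⊠ i1)). idl.
  rewrite <- cW_nat, cW10. idl. rewrite tWA. mrg. idl.
  rewrite RC, tW_cr. rwc mUr. idl. reflexivity.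
Qed.


Lemma PhiE : (i1 ⊠ m) ∘ (i2 ⊠ S) ∘ (i1 ⊠ D) ∘ D ∘ L = (i1 ⊠ u) ∘ L.
Proof.
  assert (E : i2 ⊠ S = i1 ⊠ (i1 ⊠ S)) by (rewrite <- tW_id11, tWA; reflexivity).
  rewrite E. repeat mrg. idl. rewrite SR, tW_cr. rwc DUr. idl. reflexivity.
Qed.

Lemma PhiDelta : (i1 ⊠ m) ∘ (D ⊠ i1) ∘ (m ⊠ i1) ∘ (i1 ⊠ ((i1 ⊠ S) ∘ D ∘ L)) = L ⊠ i1.
Proof.
  rewrite (tW_compc m D). idl. rewrite Bi. rewrite !tW_cl. rnorm.
  rewrite (tWA D D i1), (tW_comp i1 D). idl.
  rewrite (tW_compc i1 D). idl. rewrite (tW_split_r D S). rwc DA.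
  rewrite (tWA m m i1), (tW_compc m i1). idl. rewrite mA, tW_sr'. rnorm.
  assert (E : (i2 ⊠ (i1 ⊠ m)) ∘ ((i1 ⊠ (cW 1 1 ⊠ i1)) ⊠ i1) = (i1 ⊠ (cW 1 1 ⊠ i1)) ∘ (i2 ⊠ (i1 ⊠ m))).
  { rewrite <- (tWA i2 i1 m), tW_id21, <- (tWA i1 (cW 1 1) i1), (tWA (i1 ⊠ cW 1 1) i1 i1), tW_id11.
    rewrite !tW_comp. idl. reflexivity. }
  rwc E. rewrite (tW_comp D i2). idl. rnorm. rewrite PhiE.
  assert (E2 : (i1 ⊠ u) ∘ L = L ⊠ u) by (rewrite (tW_split_r L u), tW_r0; reflexivity).
  rewrite E2, (tW_split_r D (L ⊠ u)), tW_r0, <- tW_id11, (tWA i1 i1 (L ⊠ u)).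
  rewrite (tW_compc i1 i1). idl. rewrite <- (tWA i1 L u), tW_comp. idl.
  rewrite cW_nat, cW10. idl. rewrite (tWA L i1 u), <- (tWA i1 L (i1 ⊠ u)).
  rewrite (tW_compc (i1 ⊠ L) m). rewrite LI, mUr, tW_cl. rwc DUl. idl. reflexivity.
Qed.

Lemma PsiL : (i1 ⊠ m) ∘ (i1 ⊠ S ⊠ i1) ∘ (D ⊠ i1) ∘ (L ⊠ i1) = (i1 ⊠ m) ∘ (((i1 ⊠ S) ∘ D ∘ L) ⊠ i1).
Proof.
  rewrite (tW_comp L D). idl. rewrite <- (tWA i1 S i1), tW_comp. idl. rnorm. reflexivity.
Qed.

Lemma Frob1 : (i1 ⊠ m) ∘ (((i1 ⊠ S) ∘ D ∘ L) ⊠ i1) = (m ⊠ i1) ∘ (i1 ⊠ ((i1 ⊠ S) ∘ D ∘ L)).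
Proof.
  symmetry. rewrite <- (comp_idl ((m ⊠ i1) ∘ (i1 ⊠ ((i1 ⊠ S) ∘ D ∘ L)))).
  rewrite <- PsiPhi. rnorm. rewrite PhiDelta. rewrite <- PsiL. rnorm. reflexivity.
Qed.

Lemma PhiPsi : ((i1 ⊠ m) ∘ (D ⊠ i1)) ∘ ((i1 ⊠ m) ∘ (i1 ⊠ S ⊠ i1) ∘ (D ⊠ i1)) = i2.
Proof.
  rnorm. rewrite (tW_compc i1 D). idl. rewrite (tW_split_r D m). rnorm.
  rewrite (tW_compc i1 D). idl. rewrite (tW_split_r D (S ⊠ i1)). rnorm.
  assert (E2 : (D ⊠ i2) ∘ (D ⊠ i1) = ((i1 ⊠ D) ⊠ i1) ∘ (D ⊠ i1)).
  { rewrite <- tW_id11, <- tWA, tW_comp, DA, <- tW_comp. idl. reflexivity. }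
  rwc E2.
  assert (E3 : i2 ⊠ m = i1 ⊠ (i1 ⊠ m)) by (rewrite <- tW_id11, tWA; reflexivity).
  assert (E3' : i2 ⊠ (S ⊠ i1) = i1 ⊠ (i1 ⊠ (S ⊠ i1))) by (rewrite <- tW_id11, tWA; reflexivity).
  rewrite E3, E3', tWA. repeat mrg. idl.
  assert (E4 : m ∘ (i1 ⊠ (m ∘ (S ⊠ i1))) ∘ (D ⊠ i1) = ep ⊠ i1).
  { rewrite tW_cr. rwcb mA. rewrite <- (tWA i1 S i1). repeat mrg. idl.
    rewrite SR, tW_cl. rwc mUl. idl. reflexivity. }
  rewrite E4, <- tWA. mrg. rewrite DUr. idl. apply tW_id11.
Qed.



Lemma Iden : (i1 ⊠ l) ∘ (i1 ⊠ m) ∘ (i1 ⊠ S ⊠ i1) ∘ (D ⊠ i1) = (l ⊠ i1) ∘ (m ⊠ i1) ∘ (S ⊠ D).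
Proof.
  rewrite <- RPhi. rwc PhiPsi. idl. reflexivity.
Qed.

Lemma Su : S ∘ u = u.
Proof.
  assert (E : m ∘ (S ⊠ i1) ∘ D ∘ u = S ∘ u).
  { rewrite Du. mrg. idl. rewrite (tW_split_r (S ∘ u) u), tW_r0. rwc mUr. idl. reflexivity. }
  rewrite <- E. rwc SL. rewrite epu. idl. reflexivity.
Qed.

Lemma Ee : (ep ⊠ i1) ∘ (i1 ⊠ S) ∘ D ∘ L = S ∘ L.
Proof. mrg. idl. rewrite (tW_split_r ep S), tW_l0. rwc DUl. idl. reflexivity. Qed.

Lemma RI : m ∘ ((S ∘ L) ⊠ i1) = S ∘ L ∘ ep.
Proof.
  transitivity ((ep ⊠ i1) ∘ (i1 ⊠ m) ∘ (((i1 ⊠ S) ∘ D ∘ L) ⊠ i1)).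
  { symmetry. mrg. idl. rewrite (tW_split_r ep m), tW_l0. rnorm.
    rewrite <- tW_id11, <- (tWA ep i1 i1). mrg. idl. rewrite Ee. reflexivity. }
  rewrite Frob1. mrg. idl. rewrite epm, tWA. mrg. idl. rewrite Ee.
  rewrite (tW_split_r ep (S ∘ L)), tW_l0, tW_r0. rnorm. reflexivity.
Qed.

Lemma LCo : (l ⊠ i1) ∘ (m ⊠ i1) ∘ (i1 ⊠ ((i1 ⊠ S) ∘ D ∘ L)) = i1.
Proof.
  rewrite <- Frob1. mrg. idl. rewrite (tW_split_r l m), tW_l0. rnorm.
  rewrite <- tW_id11, <- (tWA l i1 i1). mrg. idl. mrg. idl.
  rewrite (tW_split_r l S), tW_l0. rnorm. rwc RC. rewrite lL. idl. rewrite Su. apply mUl.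
Qed.

Lemma sL : l ∘ S ∘ L = i0.
Proof.
  assert (E1 : (i1 ⊠ ((i1 ⊠ S) ∘ D ∘ L)) ∘ S ∘ L = ((S ∘ L) ⊠ i2) ∘ ((i1 ⊠ S) ∘ D ∘ L)).
  { transitivity ((S ∘ L) ⊠ ((i1 ⊠ S) ∘ D ∘ L)).
    - rewrite (tW_split_r (S ∘ L) ((i1 ⊠ S) ∘ D ∘ L)), tW_r0. reflexivity.
    - rewrite (tW_split_l (S ∘ L) ((i1 ⊠ S) ∘ D ∘ L)), tW_l0. reflexivity. }
  assert (E2 : (l ∘ S ∘ L) ⊠ i1 ∘ S ∘ L = S ∘ L).
  { transitivity ((l ⊠ i1) ∘ (m ⊠ i1) ∘ (i1 ⊠ ((i1 ⊠ S) ∘ D ∘ L)) ∘ S ∘ L).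
    2:{ rwc LCo. idl. reflexivity. }
    symmetry. rewrite E1. rewrite <- tW_id11, <- (tWA (S ∘ L) i1 i1). mrg. idl. mrg. idl. rewrite RI.
    rewrite !tW_cl. rnorm. rwc Ee. reflexivity. }
  set (sc := l ∘ S ∘ L) in *.
  assert (Ec : (sc ⊠ i1) ∘ Si = Si ∘ (sc ⊠ i1)).
  { transitivity (sc ⊠ Si).
    - rewrite <- (tW_l0 Si) at 1. rewrite tW_comp. idl. reflexivity.
    - rewrite <- (tW_l0 Si) at 2. rewrite tW_comp. idl. reflexivity. }
  assert (E3 : (sc ⊠ i1) ∘ L = L).
  { transitivity ((sc ⊠ i1) ∘ Si ∘ S ∘ L).
    - rwc SiS. idl. reflexivity.
    - rwc Ec. rwc E2. rwc SiS. idl. reflexivity. }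
  assert (Esl : l ∘ (sc ⊠ i1) = sc ∘ l).
  { transitivity (sc ⊠ l).
    - rewrite <- (tW_l0 l) at 1. rewrite tW_comp. idl. reflexivity.
    - rewrite <- (tW_l0 l) at 2. rewrite <- (tW_r0 sc) at 2. rewrite tW_comp. idl. reflexivity. }
  transitivity (sc ∘ (l ∘ L)).
  - rewrite lL. idl. reflexivity.
  - rewrite comp_assoc, <- Esl. rnorm. rewrite E3. exact lL.
Qed.

Lemma Wv : (i1 ⊠ l) ∘ (i1 ⊠ S) ∘ D ∘ L = (l ∘ S ∘ L) ⊠ u.
Proof.
  assert (E : (i1 ⊠ m) ∘ (i1 ⊠ S ⊠ i1) ∘ (D ⊠ i1) ∘ (L ⊠ u) = (i1 ⊠ S) ∘ D ∘ L).
  { rewrite (tW_comp L D). rewrite <- (tWA i1 S i1). mrg. idl.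
    rewrite (tW_split_r ((i1 ⊠ S) ∘ D ∘ L) u), tW_r0. rnorm.
    rewrite <- tW_id11, (tWA i1 i1 u). mrg. idl. rewrite mUr, tW_id11. idl. reflexivity. }
  rewrite <- E. rwc Iden. rewrite (tW_comp L S), Du, <- (tWA (S ∘ L) u u). mrg.
  rewrite (tW_split_r (S ∘ L) u), tW_r0. rnorm. idl. mrg. idl. rwc mUr. idl. reflexivity.
Qed.

Lemma wu : (i1 ⊠ l) ∘ (i1 ⊠ S) ∘ D ∘ L = u.
Proof. rewrite Wv, sL. apply tW_l0. Qed.

Lemma DeltaEq : (m ⊠ S) ∘ (i1 ⊠ (D ∘ L)) = (m ⊠ i1) ∘ (i1 ⊠ ((i1 ⊠ S) ∘ D ∘ L)).
Proof.
  symmetry. rewrite (tW_cr (D ∘ L) (i1 ⊠ S)). rewrite <- (tWA i1 i1 S), tW_id11. mrg. idl. reflexivity.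
Qed.

Lemma GF2 : ((m ⊠ i1) ∘ (i1 ⊠ ((i1 ⊠ S) ∘ D ∘ L))) ∘ m
  = (m ⊠ i1) ∘ (i1 ⊠ ((m ⊠ i1) ∘ (i1 ⊠ ((i1 ⊠ S) ∘ D ∘ L)))).
Proof.
  set (e := (i1 ⊠ S) ∘ D ∘ L).
  assert (E : (i1 ⊠ e) ∘ m = (m ⊠ i2) ∘ (i2 ⊠ e)).
  { transitivity (m ⊠ e).
    - rewrite (tW_split_r m e), tW_r0. reflexivity.
    - rewrite (tW_split_l m e). reflexivity. }
  rnorm. rewrite E. rewrite <- tW_id11, <- (tWA m i1 i1). mrg. idl. rewrite mA, tW_cl. rnorm.
  rewrite (tW_cr (i1 ⊠ e) (m ⊠ i1)), (tWA i1 m i1), (tWA i1 i1 e). reflexivity.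
Qed.

Lemma GF1 : (i1 ⊠ m) ∘ (((m ⊠ i1) ∘ (i1 ⊠ ((i1 ⊠ S) ∘ D ∘ L))) ⊠ i1)
  = ((m ⊠ i1) ∘ (i1 ⊠ ((i1 ⊠ S) ∘ D ∘ L))) ∘ m.
Proof.
  rewrite <- !Frob1. set (e := (i1 ⊠ S) ∘ D ∘ L).
  assert (E : (e ⊠ i1) ∘ m = (i2 ⊠ m) ∘ (e ⊠ i2)).
  { transitivity (e ⊠ m).
    - rewrite (tW_split_l e m), tW_l0. reflexivity.
    - rewrite (tW_split_r e m). reflexivity. }
  rnorm. rewrite E. rewrite <- tW_id11, (tWA i1 i1 m). mrg. idl. rewrite <- mA, tW_cr. rnorm.
  rewrite (tW_cl (e ⊠ i1) (i1 ⊠ m)), (tWA i1 m i1), (tWA e i1 i1). reflexivity.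
Qed.

Lemma Ke : (((m ⊠ i1) ∘ (i1 ⊠ ((i1 ⊠ S) ∘ D ∘ L))) ⊠ i1) ∘ ((i1 ⊠ S) ∘ D ∘ L)
  = (i1 ⊠ ((m ⊠ i1) ∘ (i1 ⊠ ((i1 ⊠ S) ∘ D ∘ L)))) ∘ ((i1 ⊠ S) ∘ D ∘ L).
Proof.
  rewrite <- Frob1 at 1. set (e := (i1 ⊠ S) ∘ D ∘ L).
  transitivity (((i1 ⊠ m) ⊠ i1) ∘ (e ⊠ e)).
  - rewrite tW_cl. rnorm. f_equal. rewrite (tWA e i1 i1), tW_id11.
    rewrite (tW_split_l e e), tW_l0. reflexivity.
  - rewrite tW_cr. rnorm. rewrite (tWA i1 m i1). f_equal.
    rewrite <- (tWA i1 i1 e), tW_id11. rewrite (tW_split_r e e), tW_r0. reflexivity.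
Qed.

Lemma GCo : (((m ⊠ i1) ∘ (i1 ⊠ ((i1 ⊠ S) ∘ D ∘ L))) ⊠ i1) ∘ ((m ⊠ i1) ∘ (i1 ⊠ ((i1 ⊠ S) ∘ D ∘ L)))
  = (i1 ⊠ ((m ⊠ i1) ∘ (i1 ⊠ ((i1 ⊠ S) ∘ D ∘ L)))) ∘ ((m ⊠ i1) ∘ (i1 ⊠ ((i1 ⊠ S) ∘ D ∘ L))).
Proof.
  pose proof GF2 as F. pose proof Ke as K.
  set (e := (i1 ⊠ S) ∘ D ∘ L) in *. set (Dl := (m ⊠ i1) ∘ (i1 ⊠ e)) in *.
  transitivity ((m ⊠ i2) ∘ (i1 ⊠ ((i1 ⊠ Dl) ∘ e))).
  - unfold Dl at 2. rnorm. rewrite (tW_compc m Dl). idl. rewrite F. rewrite tW_cl. rnorm.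
    rewrite (tWA i1 Dl i1). mrg. rewrite K. rewrite (tWA m i1 i1), tW_id11. idl. reflexivity.
  - symmetry. unfold Dl at 2. rnorm. rewrite (tW_compc m i1). idl. rewrite (tW_split_l m Dl). rnorm.
    f_equal. rewrite <- tW_id11, (tWA i1 i1 Dl). mrg. idl. reflexivity.
Qed.

Lemma GCr : (i1 ⊠ l) ∘ ((m ⊠ i1) ∘ (i1 ⊠ ((i1 ⊠ S) ∘ D ∘ L))) = i1.
Proof.
  rnorm. mrg. idl. rewrite (tW_split_l m l), tW_r0. rnorm.
  rewrite <- tW_id11, (tWA i1 i1 l). mrg. idl. rewrite wu. apply mUr.
Qed.

Hypothesis phim : phi ∘ m = m ∘ (phi ⊠ phi).
Hypothesis Dphi : D ∘ phi = (phi ⊠ phi) ∘ D.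
Hypothesis phiL : phi ∘ L = L.
Hypothesis phiS : phi ∘ S = S ∘ phi.
Hypothesis th2 : m ∘ (phi ⊠ S) ∘ D ∘ L = m ∘ (th ⊠ th).

Lemma GDphi : ((m ⊠ i1) ∘ (i1 ⊠ ((i1 ⊠ S) ∘ D ∘ L))) ∘ phi
  = (phi ⊠ phi) ∘ ((m ⊠ i1) ∘ (i1 ⊠ ((i1 ⊠ S) ∘ D ∘ L))).
Proof.
  assert (Pe : (phi ⊠ phi) ∘ (i1 ⊠ S) ∘ D ∘ L = (i1 ⊠ S) ∘ D ∘ L).
  { mrg. idl. rewrite phiS, (tW_sr phi S phi). rnorm. rwcb Dphi. rewrite phiL. reflexivity. }
  set (e := (i1 ⊠ S) ∘ D ∘ L) in *.
  rnorm. transitivity ((m ⊠ i1) ∘ (phi ⊠ e)).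
  - f_equal. rewrite (tW_split_r phi e), tW_r0. reflexivity.
  - symmetry. mrg. idl. rewrite phim, tW_sl. rnorm. rewrite (tWA phi phi phi). mrg. idl.
    rewrite Pe. reflexivity.
Qed.

Lemma GTh : m ∘ (phi ⊠ i1) ∘ ((m ⊠ i1) ∘ (i1 ⊠ ((i1 ⊠ S) ∘ D ∘ L))) ∘ u = m ∘ (th ⊠ th).
Proof.
  set (e := (i1 ⊠ S) ∘ D ∘ L).
  assert (E : (m ⊠ i1) ∘ (i1 ⊠ e) ∘ u = e).
  { transitivity ((m ⊠ i1) ∘ (u ⊠ e)).
    - f_equal. rewrite (tW_split_r u e), tW_r0. reflexivity.
    - rewrite (tW_split_l u e), tW_l0. rewrite <- tW_id11, <- (tWA u i1 i1). mrg.
      idl. rewrite mUl, tW_id11. idl. reflexivity. }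
  rwc E. unfold e. mrg. idl. rewrite <- th2. reflexivity.
Qed.

End Inf.

Section Fin.
Variable C : SMC.
Variable H : Ob C.
Local Notation "g ∘ f" := (comp g f) (at level 38, right associativity).
Local Notation "f ⊠ g" := (tW f g) (at level 35, right associativity).
Local Notation i0 := (idm (P H 0)).
Local Notation i1 := (idm (P H 1)).
Local Notation i2 := (idm (P H 2)).
#[local] Hint Extern 10 (Sum ?a ?c ?ac) =>
  (tryif has_evar a then fail else tryif has_evar c then fail else
  let n := eval compute in (a + c) in unify ac n; exact (@eq_refl nat n)) : typeclass_instances.
#[local] Hint Mode Sum ! ! - : typeclass_instances.

Variables (m : W H 2 1) (u : W H 0 1) (D : W H 1 2) (ep : W H 1 0) (S Si : W H 1 1)
  (L : W H 0 1) (l : W H 1 0) (phi : W H 1 1) (th : W H 0 1).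
Hypothesis hH : is_extended_hopf m u D ep S Si L l phi th.

Ltac hs := repeat (first [ apply hrel_hcast_l | apply hrel_hcast_r | apply hrel_refl
  | apply hrel_comp | apply hrel_tens ]).
Ltac hsolve := unfold tW, cW, asL, asLc, dom_ul, dom_ur, cod_ul, cod_ur, dom_11, cod_11, midswap,
  frob_coproduct; repeat rewrite <- comp_assoc; hs.
Ltac tr Hd := apply hrel_eq; lazymatch type of Hd with ?X = _ =>
  apply (hrel_trans (g := X)); [ hsolve | rewrite Hd; hsolve ] end.

Lemma Final : is_frobenius m u (frob_coproduct m D S L) l
  /\ is_extended_frobenius m u (frob_coproduct m D S L) l phi th.
Proof.
  destruct hH as [[HH [SSi [SiS [LI [RC lL]]]]] [[phim [phiu [Dphi [epphi [phiL [lphi [phiS phiSi]]]]]]] [phi2 [th1 th2]]]].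
  destruct HH as [[mA [mUl mUr]] [[DA [DUl DUr]] [Bi [Du [epm [epu [SL SR]]]]]]].
  assert (mA' : m ∘ (m ⊠ i1) = m ∘ (i1 ⊠ m)) by tr mA.
  assert (mUl' : m ∘ (u ⊠ i1) = i1) by tr mUl.
  assert (mUr' : m ∘ (i1 ⊠ u) = i1) by tr mUr.
  assert (DA' : (D ⊠ i1) ∘ D = (i1 ⊠ D) ∘ D) by tr DA.
  assert (DUl' : (ep ⊠ i1) ∘ D = i1) by tr DUl.
  assert (DUr' : (i1 ⊠ ep) ∘ D = i1) by tr DUr.
  assert (Bi' : D ∘ m = (m ⊠ m) ∘ (i1 ⊠ cW H (a:=1) (b:=1) ⊠ i1) ∘ (D ⊠ D)) by tr Bi.
  assert (Du' : D ∘ u = u ⊠ u) by tr Du.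
  assert (epm' : ep ∘ m = ep ⊠ ep) by tr epm.
  assert (epu' : ep ∘ u = i0) by exact epu.
  assert (SL' : m ∘ (S ⊠ i1) ∘ D = u ∘ ep) by tr SL.
  assert (SR' : m ∘ (i1 ⊠ S) ∘ D = u ∘ ep) by tr SR.
  assert (SSi' : S ∘ Si = i1) by exact SSi.
  assert (SiS' : Si ∘ S = i1) by exact SiS.
  unfold is_left_integral in LI. unfold is_right_cointegral in RC.
  assert (LI' : m ∘ (i1 ⊠ L) = L ∘ ep) by tr LI.
  assert (RC' : (l ⊠ i1) ∘ D = u ∘ l) by tr RC.
  assert (lL' : l ∘ L = i0) by exact lL.
  assert (phim' : phi ∘ m = m ∘ (phi ⊠ phi)) by tr phim.
  assert (Dphi' : D ∘ phi = (phi ⊠ phi) ∘ D) by tr Dphi.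
  assert (phiL' : phi ∘ L = L) by exact phiL.
  assert (phiS' : phi ∘ S = S ∘ phi) by exact phiS.
  assert (th2' : m ∘ (phi ⊠ S) ∘ D ∘ L = m ∘ (th ⊠ th)) by tr th2.
  clear DA DUl DUr Bi Du epm SL SR LI RC Dphi th2.
  assert (DE : (m ⊠ S) ∘ (i1 ⊠ (D ∘ L)) = (m ⊠ i1) ∘ (i1 ⊠ ((i1 ⊠ S) ∘ D ∘ L)))
    by (eapply DeltaEq; eassumption).
  Ltac use L G := pose proof L as G;
    repeat lazymatch type of G with ?A -> _ => specialize (G ltac:(eassumption)) end.
  pose proof (GCo mA' mUl' mUr' DA' DUl' DUr' Bi' SL' SR' LI') as G1.
  pose proof (LCo mA' mUl' mUr' DA' DUl' DUr' Bi' Du' epu' SL' SR' LI' RC' lL') as G2.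
  pose proof (GCr mA' mUl' mUr' DA' DUl' DUr' Bi' Du' epm' epu' SL' SR' SiS' LI' RC' lL') as G3.
  pose proof (GF1 mA' mUl' mUr' DA' DUl' DUr' Bi' SL' SR' LI') as G4.
  pose proof (GF2 D S L mA') as G5.
  pose proof (GDphi phim' Dphi' phiL' phiS') as G6.
  pose proof (GTh mUl' th2') as G7.
  rewrite <- DE in G1, G2, G3, G4, G5, G6, G7.
  Ltac trg E := apply hrel_eq; lazymatch type of E with ?X = _ =>
    apply (hrel_trans (g := X)); [ hsolve | rewrite E; hsolve ] end.
  split; [split; [exact (conj mA (conj mUl mUr)) | split; [split; [|split] | split] ] | ].
  - trg G1.
  - trg G2.
  - trg G3.
  - trg G4.
  - trg G5.
  - split; [split; [exact phim | split; [exact phiu | split; [trg G6 | exact lphi]]] | ].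
    split; [exact phi2 | split; [exact th1 | trg G7]].
Qed.
End Fin.

Theorem mainTheorem17 (C : SMC) (H : Ob C)
  (m : Hom C (tob H H) H) (u : Hom C unitob H)
  (Dbar : Hom C H (tob H H)) (ebar : Hom C H unitob)
  (S Sinv : Hom C H H) (Lambda : Hom C unitob H) (lambda : Hom C H unitob)
  (phi : Hom C H H) (theta : Hom C unitob H)
  (hH : is_extended_hopf m u Dbar ebar S Sinv Lambda lambda phi theta) :
  is_frobenius m u (frob_coproduct m Dbar S Lambda) lambda
  /\ is_extended_frobenius m u (frob_coproduct m Dbar S Lambda) lambda phi theta.
Proof.
  exact (@Final C H m u Dbar ebar S Sinv Lambda lambda phi theta hH).
Qed.
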